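(* Let $n \geq 3$ and let $\Omega = \bigcap_{m=0}^q \{u_m \leq 0\} \subset \mathbb{R}^n$ be a compact convex polytope with non-empty interior satisfying the standing assumptions described in the context. Then for every $\varepsilon \in (0,1)$ there exists $\delta > 0$ with the following property: if $0 \leq j < k \leq q$ and there exists a point $x \in \Omega$ with $-\delta \leq u_j(x) \leq 0$ and $-\delta \leq u_k(x) \leq 0$, then $\langle N_j, N_k \rangle \leq \varepsilon$.
   Context: Here $u_0,\dots,u_q$ are non-constant linear (affine) functions on $\mathbb{R}^n$ and $\Omega = \bigcap_{m=0}^q\{u_m\le 0\}$ is compact, convex, with non-empty interior. Standing assumptions: (a) for each $k$, the set $\{u_k>0\}\cap\bigcap_{m\neq k}\{u_m\le 0\}$ is non-empty; (b) the Euclidean gradient of each $u_k$ is a unit vector $N_k\in S^{n-1}$; (c) for $0\le j<k\le q$, if there exists $x\in\Omega$ with $u_j(x)=u_k(x)=0$, then $\langle N_j,N_k\rangle\le 0$ (Euclidean inner product). *)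

(* Defs.v *)
From mathcomp Require Import all_boot all_order all_algebra.
From mathcomp Require Import all_classical all_reals all_analysis.
Import numFieldNormedType.Exports.
Set Implicit Arguments. Unset Strict Implicit. Unset Printing Implicit Defensive.
Import Order.TTheory GRing.Theory Num.Theory.
Local Open Scope classical_set_scope.
Local Open Scope ring_scope.

Definition dotp (R : realType) (n : nat) (x y : 'rV[R]_n) : R :=
  \sum_(i < n) x 0 i * y 0 i.

Definition affu (R : realType) (n q : nat) (N : 'I_q.+1 -> 'rV[R]_n)
  (c : 'I_q.+1 -> R) (k : 'I_q.+1) (x : 'rV[R]_n) : R :=
  dotp (N k) x + c k.

Definition Omega (R : realType) (n q : nat) (N : 'I_q.+1 -> 'rV[R]_n)
  (c : 'I_q.+1 -> R) : set 'rV[R]_n :=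
  [set x | forall m : 'I_q.+1, affu N c m x <= 0].

(* Main.v *)
Require Import Defs.
From mathcomp Require Import all_boot all_order all_algebra.
From mathcomp Require Import all_classical all_reals all_analysis.
From mathcomp Require Import lra.
Import numFieldNormedType.Exports.
Import Order.TTheory GRing.Theory Num.Theory.
Local Open Scope classical_set_scope.
Local Open Scope ring_scope.

Lemma dotp_cont (R : realType) (n : nat) (v : 'rV[R]_n) :
  continuous (fun x : 'rV[R]_n => dotp v x).
Proof.
rewrite /dotp.
suff H : forall s : seq 'I_n, continuous (fun x : 'rV[R]_n => \sum_(i <- s) v 0 i * x 0 i).
  exact: H.
elim=> [|i s IH].
  under eq_fun do rewrite big_nil. exact: cst_continuous.
under eq_fun do rewrite big_cons.
move=> x; apply: cvgD; [exact: nbhs_filter| |exact: IH]. apply: cvgMr; [exact: nbhs_filter|exact: coord_continuous].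
Qed.

Lemma affu_cont (R : realType) (n q : nat) (N : 'I_q.+1 -> 'rV[R]_n)
  (c : 'I_q.+1 -> R) k : continuous (affu N c k).
Proof.
move=> x; rewrite /affu; apply: cvgD; [exact: nbhs_filter|exact: dotp_cont|exact: cst_continuous].
Qed.

Lemma pair_delta (R : realType) (n q : nat)
  (N : 'I_q.+1 -> 'rV[R]_n) (c : 'I_q.+1 -> R) (eps : R) :
  compact (Omega N c) ->
  (forall j k : 'I_q.+1, (j < k)%N ->
      (exists x, Omega N c x /\ affu N c j x = 0 /\ affu N c k x = 0) ->
      dotp (N j) (N k) <= 0) -> 0 < eps ->
  forall j k : 'I_q.+1, (j < k)%N ->
  exists d : R, 0 < d /\ forall x, Omega N c x -> - d <= affu N c j x <= 0 ->
     - d <= affu N c k x <= 0 -> dotp (N j) (N k) <= eps.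
Proof.
move=> cO hc he j k jk.
have [hle|hgt] := lerP (dotp (N j) (N k)) eps.
  by exists 1; split => //.
have nz : ~ exists x, Omega N c x /\ affu N c j x = 0 /\ affu N c k x = 0.
  by move=> /(hc _ _ jk) h; have := lt_trans he hgt; rewrite ltNge h.
have [ne|e] := pselect (Omega N c !=set0); last first.
  by exists 1; split => // x Ox; exfalso; apply: e; exists x.
pose f x := - affu N c j x - affu N c k x.
have fc : {within Omega N c, continuous f}.
  apply: continuous_subspaceT => x; apply: cvgD; [exact: nbhs_filter| |].
    apply: cvgN; [exact: nbhs_filter|exact: affu_cont].
  apply: cvgN; [exact: nbhs_filter|exact: affu_cont].
have [x0 /set_mem Ox0 hmin] := compact_EVT_min ne cO fc.
have hj := Ox0 j; have hk := Ox0 k.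
have fpos : 0 < f x0.
  rewrite /f; have [ej|ej] := eqVneq (affu N c j x0) 0.
    have [ek|ek] := eqVneq (affu N c k x0) 0.
      by exfalso; apply: nz; exists x0.
    have : affu N c k x0 < 0 by rewrite lt_neqAle ek.
    lra.
  have : affu N c j x0 < 0 by rewrite lt_neqAle ej.
  lra.
exists (f x0 / 3); split; first by lra.
move=> x Ox /andP[h1 h2] /andP[h3 h4].
suff : False by []. have := hmin x (mem_set Ox); move: fpos h1 h3; rewrite /f; lra.
Qed.

Theorem lemma2p2 (R : realType) (n q : nat)
  (N : 'I_q.+1 -> 'rV[R]_n) (c : 'I_q.+1 -> R) :
  (3 <= n)%N ->
  (* Omega compact, convex, with non-empty interior *)
  compact (Omega N c) -> convex_set (Omega N c) -> (Omega N c)° !=set0 ->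
  (* (a) *)
  (forall k : 'I_q.+1, exists x : 'rV[R]_n,
      0 < affu N c k x /\ forall m : 'I_q.+1, m != k -> affu N c m x <= 0) ->
  (* (b) each gradient N_k is a unit vector *)
  (forall k : 'I_q.+1, dotp (N k) (N k) = 1) ->
  (* (c) *)
  (forall j k : 'I_q.+1, (j < k)%N ->
      (exists x, Omega N c x /\ affu N c j x = 0 /\ affu N c k x = 0) ->
      dotp (N j) (N k) <= 0) ->
  forall eps : R, 0 < eps < 1 ->
  exists delta : R, 0 < delta /\
    forall j k : 'I_q.+1, (j < k)%N ->
      (exists x, Omega N c x /\ - delta <= affu N c j x <= 0
                             /\ - delta <= affu N c k x <= 0) ->
      dotp (N j) (N k) <= eps.
Proof.
move=> _ cO _ _ _ _ hc eps /andP[he _].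
have H : forall p : ('I_q.+1 * 'I_q.+1)%type, exists d : R, 0 < d /\ forall x, (p.1 < p.2)%N ->
   Omega N c x -> - d <= affu N c p.1 x <= 0 ->
     - d <= affu N c p.2 x <= 0 -> dotp (N p.1) (N p.2) <= eps.
  move=> [j k] /=; have [jk|jk] := boolP (j < k)%N.
    have [d [d0 hd]] := @pair_delta _ _ _ N c eps cO hc he j k jk.
    by exists d; split => // x _; exact: hd.
  by exists 1; split => // x /negP.
suff [d [d0 hd]] : exists d : R, 0 < d /\ forall p, p \in enum {: 'I_q.+1 * 'I_q.+1} ->
   forall x, (p.1 < p.2)%N -> Omega N c x -> - d <= affu N c p.1 x <= 0 ->
     - d <= affu N c p.2 x <= 0 -> dotp (N p.1) (N p.2) <= eps.
  exists d; split => // j k jk [x [Ox [h1 h2]]].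
  exact: (hd (j, k) (mem_enum _ _) x jk Ox h1 h2).
elim: (enum _) => [|p s [d [d0 hd]]].
  by exists 1; split.
have [d' [d'0 hd']] := H p.
exists (Num.min d d'); split; first by rewrite lt_min d0 d'0.
move=> p' /[1!inE] /orP[/eqP ->|ps] x hp Ox /andP[h1 h2] /andP[h3 h4].
  apply: hd' => //; apply/andP; split => //; apply: le_trans (_ : - Num.min d d' <= _) => //;
  by rewrite lerN2 ge_min lexx orbT.
apply: hd => //; apply/andP; split => //; apply: le_trans (_ : - Num.min d d' <= _) => //;
by rewrite lerN2 ge_min lexx.
Qed.
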